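(* Let $(\Omega,\mathcal{F},P,T)$ be an ergodic measure preserving system with $(\Omega,\mathcal{F})$ a standard measurable space. The following are equivalent: (i) there exists $B\in\mathcal{F}$ with $P(B)>0$ such that for every $C\in\mathcal{F}$ with $C\subset B$, $\lim_{n\to\infty}\frac{1}{n}\sum_{i=0}^{n-1}P^{1/2}(B\cap T^{-i}C)=P^{1/2}(B)P(C)$; (ii) $P$ is periodic, i.e. there exist $r\in\mathbb{N}$ and distinct points $\omega_1,\dots,\omega_r\in\Omega$ with $P(\{\omega_i\})=\frac{1}{r}$ for $i=1,\dots,r$. In this case (with $B$ as in (i)), $r=\frac{1}{P(B)}\in\mathbb{N}$.
   Context: A measure preserving system is a probability space $(\Omega,\mathcal{F},P)$ with measurable $T:\Omega\to\Omega$ and $P(T^{-1}A)=P(A)$ for all $A$; it is ergodic if $P(A)\in\{0,1\}$ whenever $T^{-1}A=A$. A measurable space is standard if isomorphic to a complete separable metric space with its Borel $\sigma$-algebra. $P^{1/2}(A)=(P(A))^{1/2}$. *)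

(* Defs.v *)
From HB Require Import structures.
From mathcomp Require Import all_boot all_order all_algebra.
From mathcomp Require Import all_classical all_reals all_analysis.
Set Implicit Arguments. Unset Strict Implicit. Unset Printing Implicit Defensive.
Import Order.TTheory GRing.Theory Num.Theory.
Import numFieldNormedType.Exports.
Local Open Scope classical_set_scope.
Local Open Scope ring_scope.

Definition metric_open (R : realType) (X : Type) (dist : X -> X -> R) (U : set X) :=
  forall x, U x -> exists e : R, 0 < e /\ forall y, dist x y < e -> U y.

Definition is_metric (R : realType) (X : Type) (dist : X -> X -> R) :=
  (forall x y, 0 <= dist x y) /\ (forall x y, dist x y = 0 <-> x = y) /\
  (forall x y, dist x y = dist y x) /\
  (forall x y z, dist x z <= dist x y + dist y z).

Definition metric_complete (R : realType) (X : Type) (dist : X -> X -> R) :=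
  forall u : nat -> X,
    (forall e : R, 0 < e -> exists N, forall m n, (N <= m)%N -> (N <= n)%N -> dist (u m) (u n) < e) ->
    exists l, forall e : R, 0 < e -> exists N, forall n, (N <= n)%N -> dist (u n) l < e.

Definition metric_separable (R : realType) (X : Type) (dist : X -> X -> R) :=
  exists s : nat -> X, forall x (e : R), 0 < e -> exists n, dist x (s n) < e.

Definition standard_space (R : realType) (d : measure_display) (Om : measurableType d) :=
  exists (X : Type) (dist : X -> X -> R) (f : Om -> X) (g : X -> Om),
    [/\ is_metric dist, metric_complete dist, metric_separable dist,
        cancel f g /\ cancel g f &
        forall A : set Om, measurable A <-> <<s metric_open dist >> (f @` A)].

Definition measure_preserving (R : realType) (d : measure_display) (Om : measurableType d)
  (P : probability Om R) (T : Om -> Om) :=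
  measurable_fun setT T /\ forall A : set Om, measurable A -> P (T @^-1` A) = P A.

Definition ergodic (R : realType) (d : measure_display) (Om : measurableType d)
  (P : probability Om R) (T : Om -> Om) :=
  forall A : set Om, measurable A -> T @^-1` A = A -> P A = 0%E \/ P A = 1%E.

Definition cesaro_sqrt_property (R : realType) (d : measure_display) (Om : measurableType d)
  (P : probability Om R) (T : Om -> Om) (B : set Om) :=
  [/\ measurable B, (0 < P B)%E &
    forall C : set Om, measurable C -> C `<=` B ->
      (fun n : nat => (n%:R^-1 : R) * \sum_(i < n) Num.sqrt (fine (P (B `&` (iter i T) @^-1` C))))
        @ \oo --> (Num.sqrt (fine (P B)) * fine (P C) : R)].

Definition periodic_with (R : realType) (d : measure_display) (Om : measurableType d)
  (P : probability Om R) (r : nat) (w : 'I_r -> Om) :=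
  [/\ (0 < r)%N, injective w & forall i, P [set w i] = (r%:R^-1)%:E].

(* Main.v *)
Require Import Defs.
From HB Require Import structures.
From mathcomp Require Import all_boot all_order all_algebra.
From mathcomp Require Import all_classical all_reals all_analysis.
From mathcomp Require Import ring lra zify.
Set Implicit Arguments. Unset Strict Implicit. Unset Printing Implicit Defensive.
Import Order.TTheory GRing.Theory Num.Theory.
Import numFieldNormedType.Exports.
Local Open Scope classical_set_scope.
Local Open Scope ring_scope.

Section API.
Context (R : realType) (d : measure_display) (Om : measurableType d) (P : probability Om R).

Definition pm (A : set Om) : R := fine (P A).

Lemma PE A : measurable A -> P A = (pm A)%:E.
Proof.
move=> mA; rewrite /pm fineK // ge0_fin_numE ?measure_ge0 //.
by apply: (le_lt_trans (probability_le1 P mA)); rewrite ltry.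
Qed.

Lemma pm_ge0 A : 0 <= pm A.
Proof. by rewrite /pm fine_ge0 // measure_ge0. Qed.

Lemma pm_le1 A : measurable A -> pm A <= 1.
Proof. by move=> mA; rewrite -lee_fin -PE // probability_le1. Qed.

Lemma pm_le A B : measurable A -> measurable B -> A `<=` B -> pm A <= pm B.
Proof. by move=> mA mB AB; rewrite -lee_fin -!PE // le_measure // inE. Qed.

Lemma pm_setT : pm setT = 1.
Proof. by rewrite /pm probability_setT. Qed.

Lemma pm_set0 : pm set0 = 0.
Proof. by rewrite /pm measure0. Qed.

Lemma pm_U A B : measurable A -> measurable B -> A `&` B = set0 ->
  pm (A `|` B) = pm A + pm B.
Proof.
move=> mA mB AB; apply: EFin_inj; rewrite EFinD -!PE //;
  last exact: measurableU.
by rewrite measureU.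
Qed.

Lemma pm_subU A B : measurable A -> measurable B -> pm (A `|` B) <= pm A + pm B.
Proof.
move=> mA mB; rewrite -lee_fin EFinD -!PE //; last exact: measurableU.
exact: measureU2.
Qed.

Lemma pm_DI A B : measurable A -> measurable B -> pm A = pm (A `\` B) + pm (A `&` B).
Proof.
move=> mA mB; apply: EFin_inj; rewrite EFinD -!PE //;
  [|exact: measurableI|exact: measurableD].
by rewrite -measureDI.
Qed.

Lemma pm_big n (F : nat -> set Om) : (forall i, measurable (F i)) ->
  pm (\big[setU/set0]_(i < n) F i) <= \sum_(i < n) pm (F i).
Proof.
move=> mF; elim: n => [|n IH]; first by rewrite !big_ord0 pm_set0.
rewrite !big_ord_recr /=.
apply: le_trans (pm_subU _ _) _; [|exact: mF|by rewrite lerD2r].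
by apply: bigsetU_measurable => i _.
Qed.

Lemma pm_big_disj n (F : nat -> set Om) : (forall i, measurable (F i)) ->
  (forall i j, i != j -> F i `&` F j = set0) ->
  pm (\big[setU/set0]_(i < n) F i) = \sum_(i < n) pm (F i).
Proof.
move=> mF dF; elim: n => [|n IH]; first by rewrite !big_ord0 pm_set0.
rewrite !big_ord_recr /= pm_U ?IH //; first by apply: bigsetU_measurable => i _.
rewrite big_distrl /=; apply: big1 => i _; apply: dF.
by rewrite neq_ltn ltn_ord.
Qed.

End API.

Lemma cesaro_per (R : realType) (u : nat -> R) s : (0 < s)%N ->
  (forall i, u (s + i)%N = u i) ->
  (fun n : nat => n%:R^-1 * \sum_(i < n) u i) @ \oo --> (\sum_(i < s) u i) / s%:R.
Proof.
move=> s0 up; set S := \sum_(i < s) u i; set L := S / s%:R.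
pose v n := \sum_(i < n) u i - n%:R * L.
have s0' : s%:R != 0 :> R by rewrite pnatr_eq0 -lt0n.
have vP n : v (s + n)%N = v n.
  rewrite /v big_split_ord /=.
  rewrite [X in _ + X - _](eq_bigr (fun i : 'I_n => u i)); last by move=> i _; rewrite up.
  rewrite natrD mulrDl /L mulrCA mulfV // mulr1 -/S.
  by rewrite opprD addrACA subrr add0r.
pose M := \sum_(i < s) `|v i|.
have M0 : 0 <= M by apply: sumr_ge0.
have vB n : `|v n| <= M.
  elim/ltn_ind: n => n IH.
  case: (ltnP n s) => ns.
    rewrite /M (bigD1 (Ordinal ns)) //= lerDl.
    by apply: sumr_ge0.
  have -> : n = (s + (n - s))%N by rewrite subnKC.
  rewrite vP; apply: IH.
  by rewrite ltn_subrL s0 /=; apply: leq_trans ns.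
apply/cvgrPdist_le => e e0.
near=> n.
have n0 : (0 < n)%N by near: n; exact: nbhs_infty_gt.
have Mn : M / e <= n%:R by near: n; exact: nbhs_infty_ger.
have n0' : (0 : R) < n%:R by rewrite ltr0n.
have -> : L - n%:R^-1 * \sum_(i < n) u i = - (v n / n%:R).
  rewrite /v mulrBl mulrAC mulfV ?gt_eqF // mul1r mulrC.
  by rewrite opprB addrC.
rewrite normrN normrM normfV (gtr0_norm n0').
rewrite ler_pdivrMr // (le_trans (vB n)) //.
by rewrite -ler_pdivrMl // mulrC.
Unshelve. all: end_near. Qed.

Lemma avg_sq (R : realType) (x : nat -> R) n :
  (n%:R^-1 * \sum_(i < n) x i) ^+ 2 <= n%:R^-1 * \sum_(i < n) x i ^+ 2.
Proof.
case: n => [|n]; first by rewrite !big_ord0 !mulr0 expr0n.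
set N : R := n.+1%:R; have N0 : 0 < N by rewrite ltr0n.
set m := N^-1 * \sum_(i < n.+1) x i.
have H : 0 <= \sum_(i < n.+1) (x i - m) ^+ 2 by apply: sumr_ge0 => i _; apply: sqr_ge0.
have E : \sum_(i < n.+1) (x i - m) ^+ 2 =
   \sum_(i < n.+1) x i ^+ 2 - N * m ^+ 2.
  rewrite (eq_bigr (fun i : 'I_n.+1 => x i ^+ 2 + (-(2 * m) * x i + m ^+ 2)));
    last by move=> i _; ring.
  have Sx : \sum_(i < n.+1) x i = N * m by rewrite /m mulrA mulfV ?gt_eqF // mul1r.
  rewrite big_split big_split /= -mulr_sumr sumr_const card_ord Sx -mulr_natr -/N.
  ring.
rewrite E subr_ge0 in H.
by rewrite ler_pdivlMl // mulrC -ler_pdivlMr // mulrC.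
Qed.

Section Cont.
Context (R : realType) (d : measure_display) (Om : measurableType d) (P : probability Om R).

Lemma pm_decr (F : nat -> set Om) : (forall i, measurable (F i)) ->
  nonincreasing_seq F -> (fun i => pm P (F i)) @ \oo --> pm P (\bigcap_i F i).
Proof.
move=> mF dF.
have h := @nonincreasing_cvg_mu _ _ _ P F _ mF (bigcapT_measurable mF) dF.
suff h' : (P \o F) @ \oo --> (pm P (\bigcap_i F i))%:E by exact: (fine_cvg h').
rewrite -PE; last exact: bigcapT_measurable.
apply: h; by apply: (le_lt_trans (probability_le1 P (mF 0%N))); rewrite ltry.
Qed.

Lemma pm_incr (F : nat -> set Om) : (forall i, measurable (F i)) ->
  nondecreasing_seq F -> (fun i => pm P (F i)) @ \oo --> pm P (\bigcup_i F i).
Proof.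
move=> mF dF.
have h := @nondecreasing_cvg_mu _ _ _ P F mF (bigcupT_measurable _ mF) dF.
suff h' : (P \o F) @ \oo --> (pm P (\bigcup_i F i))%:E by exact: (fine_cvg h').
by rewrite -PE; last exact: bigcupT_measurable.
Qed.

Lemma eventually_lt (u : nat -> R) (l z : R) : u @ \oo --> l -> l < z ->
  exists N, forall n, (N <= n)%N -> u n < z.
Proof.
move=> ul lz; have := cvgr_lt l ul z lz.

by case=> N _ HN; exists N => n Nn; apply: HN.
Qed.

End Cont.

Section MP.
Context (R : realType) (d : measure_display) (Om : measurableType d) (P : probability Om R)
  (T : Om -> Om) (mp : measure_preserving P T).

Lemma T_meas A : measurable A -> measurable (T @^-1` A).
Proof. by move=> mA; rewrite -[T @^-1` A]setTI; apply: mp.1. Qed.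

Lemma iter_meas i A : measurable A -> measurable (iter i T @^-1` A).
Proof.
elim: i A => [|i IH] A mA //.
exact: (IH (T @^-1` A) (T_meas mA)).
Qed.

Lemma iter_pres i A : measurable A -> P (iter i T @^-1` A) = P A.
Proof.
elim: i A => [|i IH] A mA //.
rewrite -(mp.2 A mA); exact: (IH (T @^-1` A) (T_meas mA)).
Qed.

Lemma iter_pm i A : measurable A -> pm P (iter i T @^-1` A) = pm P A.
Proof. by move=> mA; rewrite /pm iter_pres. Qed.

Lemma iter_preD i j A : iter (i + j) T @^-1` A = iter j T @^-1` (iter i T @^-1` A).
Proof. by apply/seteqP; split => x /=; rewrite iterD. Qed.

End MP.

Lemma archi_inv (R : realType) (e : R) : 0 < e -> exists k : nat, (k.+1%:R)^-1 < e.
Proof.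
move=> e0; exists (Num.Def.archi_bound (e^-1)).
rewrite -[X in _ < X](invrK e) ltf_pV2 ?posrE ?invr_gt0 ?ltr0n //.
apply: lt_le_trans (archi_boundP _) _; first by rewrite invr_ge0 ltW.
by rewrite ler_nat.
Qed.

Lemma mem_bigsetU (T : Type) (C : nat -> set T) n z :
  (\big[setU/set0]_(j < n) C j) z <-> exists2 j, (j < n)%N & C j z.
Proof. by rewrite -bigcup_mkord; split => -[j]; exists j. Qed.

Section Std.
Context (R : realType) (d : measure_display) (Om : measurableType d) (P : probability Om R)
  (X : Type) (dist : X -> X -> R) (f : Om -> X) (g : X -> Om)
  (hm : is_metric dist) (fg : cancel f g) (gf : cancel g f)
  (hmeas : forall A : set Om, measurable A <-> <<s metric_open dist >> (f @` A)).

Definition mball c e := [set z : Om | dist c (f z) < e].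

Lemma dist_ge0 x y : 0 <= dist x y. Proof. by case: hm. Qed.
Lemma dist_eq0 x y : dist x y = 0 <-> x = y. Proof. by case: hm => _ []. Qed.
Lemma dist_sym x y : dist x y = dist y x. Proof. by case: hm => _ [_ []]. Qed.
Lemma dist_tri x y z : dist x z <= dist x y + dist y z. Proof. by case: hm => _ [_ []]. Qed.

Lemma img_f (A : set X) : f @` [set z | A (f z)] = A.
Proof.
apply/seteqP; split => [y [z Az <-] //|y Ay].
by exists (g y) => //=; rewrite gf.
Qed.

Lemma ball_meas c e : measurable (mball c e : set Om).
Proof.
apply/hmeas; rewrite /mball (img_f [set y | dist c y < e]).
apply: sub_sigma_algebra => y /= hy; exists (e - dist c y); split.
  by rewrite subr_gt0.
move=> y' hy'; apply: le_lt_trans (dist_tri c y y') _.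
by rewrite -ltrBrDl.
Qed.

Lemma sing_meas (z : Om) : measurable [set z].
Proof.
rewrite -[[set z]]setCK; apply: measurableC; apply/hmeas.
have -> : ~` [set z] = [set w | (fun y => y <> f z) (f w)].
  apply/seteqP; split => w /= h; last by move=> wz; apply: h; rewrite wz.
  by move=> /(congr1 g); rewrite !fg.
rewrite (img_f (fun y => y <> f z)); apply: sub_sigma_algebra => y /= hy.
exists (dist y (f z)); split.
  rewrite lt_neqAle dist_ge0 andbT eq_sym; apply/eqP => /dist_eq0; exact: hy.
move=> y' hy' ey'; move: hy'; rewrite ey' => /[dup] h.
by rewrite ltxx.
Qed.

Lemma sing_ball z : \bigcap_k mball (f z) (k.+1%:R^-1) = [set z].
Proof.
apply/seteqP; split => [w /= h|w /= ->]; last first.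
  move=> k _; rewrite /mball /= (proj2 (dist_eq0 _ _) erefl).
  by rewrite invr_gt0 ltr0n.
have : dist (f z) (f w) = 0.
  apply/eqP; rewrite eq_le dist_ge0 andbT; apply/negP => /negP; rewrite -ltNge => h0.
  have [k hk] := archi_inv h0.
  by have := h k I; rewrite /mball /= ltNge (ltW hk).
by move/dist_eq0 => /(congr1 g); rewrite !fg => ->.
Qed.

Lemma noatom_small (noat : forall z, P [set z] = 0%E) z (del : R) : 0 < del ->
  exists e, 0 < e /\ pm P (mball (f z) e) < del.
Proof.
move=> d0.
have := @pm_decr _ _ _ P (fun k => mball (f z) (k.+1%:R^-1)) (fun k => ball_meas _ _) _.
rewrite sing_ball /pm noat /= => /(_ _) /eventually_lt /(_ d0) [].
  move=> i j ij; apply/subsetPset => w; rewrite /mball /= => h; apply: lt_le_trans h _.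
  by rewrite lef_pV2 ?posrE ?ltr0n // ler_nat.
by move=> N /(_ N (leqnn _)) h; exists (N.+1%:R^-1); rewrite invr_gt0 ltr0n.
Qed.

End Std.

Section Part.
Context (R : realType) (d : measure_display) (Om : measurableType d) (P : probability Om R)
  (X : Type) (dist : X -> X -> R) (f : Om -> X) (g : X -> Om)
  (hm : is_metric dist) (fg : cancel f g) (gf : cancel g f)
  (hmeas : forall A : set Om, measurable A <-> <<s metric_open dist >> (f @` A)).

Lemma small_partition (hsep : metric_separable dist) (noat : forall z, P [set z] = 0%E)
  (B : set Om) (mB : measurable B) (del : R) (d0 : 0 < del) :
  exists N (C : nat -> set Om), [/\ forall j, measurable (C j), forall j, C j `<=` B,
     forall i j, i != j -> C i `&` C j = set0, B `<=` \big[setU/set0]_(j < N) C j &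
     forall j, pm P (C j) < del].
Proof.
case: hsep => s hs.
pose bl := mball dist f.
pose G m : set Om := match unpickle m with
  | Some (n, k) => if pm P (bl (s n) (k.+1%:R^-1)) < del then bl (s n) (k.+1%:R^-1) else set0
  | None => set0 end.
have mG m : measurable (G m).
  rewrite /G; case: unpickle => [[n k]|] //; case: ifP => // _.
  exact: ball_meas.
have pG m : pm P (G m) < del.
  rewrite /G; case: unpickle => [[n k]|]; last by rewrite pm_set0.
  by case: ifP => // _; rewrite pm_set0.
have cover z : exists m, G m z.
  have [e [e0 he]] := noatom_small hm fg gf hmeas noat z d0.
  have [k hk] := archi_inv (divr_gt0 e0 (ltr0n R 2)).
  have r0 : (0 : R) < k.+1%:R^-1 by rewrite invr_gt0 ltr0n.
  have [n hn] := hs (f z) _ r0.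
  have sub : bl (s n) (k.+1%:R^-1) `<=` bl (f z) e.
    move=> w; rewrite /bl /mball /= => hw.
    apply: le_lt_trans (dist_tri hm (f z) (s n) (f w)) _.
    apply: lt_le_trans (ltrD hn hw) _.
    by rewrite [e]splitr; apply: lerD; apply: ltW.
  have pb : pm P (bl (s n) (k.+1%:R^-1)) < del.
    apply: le_lt_trans he; apply: pm_le => //; exact: ball_meas.
  exists (pickle (n, k)); rewrite /G pickleK pb /bl /mball /=.
  by rewrite (dist_sym hm).
pose H N := \big[setU/set0]_(m < N) G m.
have mH N : measurable (H N) by apply: bigsetU_measurable => i _.
have GH m N : (m < N)%N -> G m `<=` H N.
  by move=> mN z Gz; apply/mem_bigsetU; exists m.
have HH M N : (M <= N)%N -> H M `<=` H N.
  move=> MN z /mem_bigsetU [m mM Gz]; apply/mem_bigsetU; exists m => //.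
  exact: leq_trans MN.
pose D N := B `\` H N.
have mD N : measurable (D N) by apply: measurableD.
have dD : nonincreasing_seq D.
  move=> i j ij; apply/subsetPset => z [Bz Hz]; split => // Hz'; apply: Hz.
  exact: HH Hz'.
have := pm_decr (P:=P) mD dD.
have -> : \bigcap_i D i = set0.
  apply/seteqP; split => // z Dz; have [m Gz] := cover z.
  by have [_ ] := Dz m.+1 I; apply; apply: (GH m).
rewrite pm_set0 => /eventually_lt /(_ d0) [N /(_ N (leqnn N)) hN].
pose C j := if (j < N)%N then B `&` G j `\` H j else if j == N then D N else set0.
have lt_disj i j : (i < j)%N -> C i `&` C j = set0.
  move=> ij; rewrite /C; case: ifPn => iN.
    case: ifPn => jN.
      apply/seteqP; split => // z [[[_ Gz] _] [_ Hz]]; apply: Hz; exact: (GH i).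
    case: ifPn => // _; apply/seteqP; split => // z [[[_ Gz] _] [_ Hz]].
    by apply: Hz; exact: (GH i).
  have jN : (N < j)%N.
    by apply: leq_trans ij; rewrite ltnS leqNgt.
  have -> : (j < N)%N = false by apply/negbTE; rewrite -leqNgt ltnW.
  have -> : (j == N) = false by apply/negbTE; rewrite neq_ltn jN orbT.
  by rewrite setI0.
have cov : forall M z, B z -> H M z -> exists2 j, (j < M)%N & (B `&` G j `\` H j) z.
  elim=> [|M IH] z Bz; first by rewrite /H big_ord0.
  rewrite /H big_ord_recr /= => -[Hz|Gz].
    by have [j jM hj] := IH z Bz Hz; exists j => //; apply: ltnW.
  case: (pselect (H M z)) => Hz.
    by have [j jM hj] := IH z Bz Hz; exists j => //; apply: ltnW.
  by exists M.
exists N.+1, C; split.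
- move=> j; rewrite /C; case: ifP => _; first by apply: measurableD => //; apply: measurableI.
  by case: ifP.
- move=> j; rewrite /C; case: ifP => _; first by move=> z [[]].
  by case: ifP => // _ z [].
- move=> i j; rewrite neq_ltn => /orP[] ij; first exact: lt_disj.
  by rewrite setIC; apply: lt_disj.
- move=> z Bz; apply/mem_bigsetU.
  case: (pselect (H N z)) => Hz.
    have [j jN hj] := cov N z Bz Hz; exists j; first exact: ltnW.
    by rewrite /C jN.
  by exists N => //; rewrite /C ltnn eqxx.
- move=> j; rewrite /C; case: ifPn => jN.
    apply: le_lt_trans (pG j); apply: pm_le => //.
      by apply: measurableD => //; apply: measurableI.
    by move=> z [[]].
  by case: ifP => // _; rewrite pm_set0.
Qed.

End Part.

Lemma cvg_bigsum (R : realType) N (u : nat -> nat -> R) (l : nat -> R) :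
  (forall j, (u j) @ \oo --> l j) ->
  (fun n => \sum_(j < N) u j n) @ \oo --> \sum_(j < N) l j.
Proof.
move=> h; elim: N => [|N IH].
  under eq_fun do rewrite big_ord0.
  by rewrite big_ord0; exact: cvg_cst.
under eq_fun do rewrite big_ord_recr /=.
rewrite big_ord_recr /=; exact: cvgD.
Qed.

Section Step1.
Context (R : realType) (d : measure_display) (Om : measurableType d) (P : probability Om R)
  (T : Om -> Om) (mp : measure_preserving P T).

Lemma step1 (B : set Om) (hB : cesaro_sqrt_property P T B) N (C : nat -> set Om) :
  (forall j, measurable (C j)) -> (forall j, C j `<=` B) ->
  (forall i j, i != j -> C i `&` C j = set0) -> B `<=` \big[setU/set0]_(j < N) C j ->
  (forall j, pm P (C j) < pm P B ^+ 3 / 4) -> False.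
Proof.
case: hB => mB PB hlim mC CB dC cov small.
set p := pm P B.
have p0 : 0 < p by rewrite -lte_fin -PE.
set del := p ^+ 3 / 4.
pose c i := pm P (B `&` iter i T @^-1` B).
pose a j i := pm P (B `&` iter i T @^-1` C j).
have mI (i : nat) (A : set Om) : measurable A -> measurable (B `&` iter i T @^-1` A).
  by move=> mA; apply: measurableI => //; apply: (iter_meas mp).
have F1 i : c i <= \sum_(j < N) a j i.
  have := pm_big P N (F:= fun j => B `&` iter i T @^-1` C j) (fun j => mI i _ (mC j)).
  apply: le_trans.
  apply: pm_le => //; [exact: mI|by apply: bigsetU_measurable => j _; apply: mI|].
  move=> z [Bz Tz]; have /mem_bigsetU [j jN Cj] := cov _ Tz.
  by apply/(proj2 (mem_bigsetU (fun j => B `&` iter i T @^-1` C j) _ _)); exists j.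
have F2 j i : a j i <= Num.sqrt del * Num.sqrt (a j i).
  have a0 : 0 <= a j i by apply: pm_ge0.
  have ad : a j i <= del.
    apply: le_trans (ltW (small j)).
    rewrite -(iter_pm mp i (mC j)); apply: pm_le; [exact: mI|exact: (iter_meas mp)|].
    by move=> z [].
  rewrite -{1}(sqr_sqrtr a0) expr2 mulrC ler_wpM2r ?sqrtr_ge0 //.
  by rewrite ler_sqrt // (le_trans a0 ad).
have F3 i : c i <= Num.sqrt del * \sum_(j < N) Num.sqrt (a j i).
  by apply: le_trans (F1 i) _; rewrite mulr_sumr; apply: ler_sum => j _.
have sumC : \sum_(j < N) pm P (C j) = p.
  rewrite -pm_big_disj //; congr pm; apply/seteqP; split => // z.
  by move/mem_bigsetU => [j _ /CB].
have L1 : (fun n : nat => n%:R^-1 * \sum_(i < n) \sum_(j < N) Num.sqrt (a j i)) @ \oo -->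
    Num.sqrt p * p.
  rewrite -{2}sumC mulr_sumr.
  under eq_fun do rewrite exchange_big mulr_sumr /=.
  apply: (cvg_bigsum (u := fun j (n : nat) => n%:R^-1 * \sum_(i < n) Num.sqrt (a j i)) (l := fun j => Num.sqrt p * pm P (C j))) => j.
  exact: hlim.
have L2 := hlim B mB (@subset_refl _ B).
set q := Num.sqrt p * p.
have q0 : 0 < q by rewrite mulr_gt0 // sqrtr_gt0.
have ineq : q ^+ 2 <= Num.sqrt del * q.
  rewrite expr2; apply: (ler_cvg_to (cvgM L2 L2) (cvgMr (a:=Num.sqrt del) L1)).
  near=> n => /=.
  have h1 := avg_sq (fun i => Num.sqrt (fine (P (B `&` iter i T @^-1` B)))) n.
  rewrite -expr2; apply: le_trans h1 _.
  rewrite mulrCA; apply: ler_wpM2l; first by rewrite invr_ge0.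
  rewrite mulr_sumr; apply: ler_sum => i _.
  by rewrite sqr_sqrtr ?pm_ge0 //; apply: F3.
have : q <= Num.sqrt del by rewrite expr2 ler_pM2r // in ineq.
have : q ^+ 2 = p ^+ 3 by rewrite exprMn sqr_sqrtr ?ltW // -exprS.
move=> qE qd.
have del0 : 0 <= del by rewrite /del divr_ge0 // exprn_ge0 // ltW.
have : q ^+ 2 <= del.
  by rewrite -(sqr_sqrtr del0) lerXn2r // nnegrE ?(ltW q0) ?sqrtr_ge0.
rewrite qE /del ler_pdivlMr // => h.
have p3 : 0 < p ^+ 3 by apply: exprn_gt0.
by move: h; rewrite ger_pMr //; lra.
Unshelve. all: end_near. Qed.

End Step1.

Section Cyc.
Context (R : realType) (d : measure_display) (Om : measurableType d) (P : probability Om R)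
  (T : Om -> Om) (mp : measure_preserving P T) (erg : ergodic P T)
  (sm : forall z : Om, measurable [set z]).

Definition orb (z : Om) := [set y | exists i, y = iter i T z].

Lemma orb_meas z : measurable (orb z).
Proof.
have -> : orb z = \bigcup_i [set iter i T z].
  by apply/seteqP; split => y /= [i]; [move=> ->; exists i|move=> _ ->; exists i].
by apply: bigcupT_measurable => i; apply: sm.
Qed.

Lemma pm_full (B W : set Om) : measurable B -> measurable W -> pm P W = 1 ->
  pm P (B `&` W) = pm P B.
Proof.
move=> mB mW W1.
have h1 := pm_DI P mB mW.
have h2 := pm_DI P (@measurableT _ Om) mW.
rewrite pm_setT setTI W1 in h2.
have : pm P (B `\` W) <= pm P (setT `\` W).
  apply: pm_le; [exact: measurableD|exact: measurableD|by move=> y [] ].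
have := pm_ge0 P (B `\` W).
lra.
Qed.

Lemma orb_full z : 0 < pm P [set z] -> pm P (orb z) = 1.
Proof.
move=> z0.
pose A := [set y | exists n, orb z (iter n T y)].
pose F n := iter n T @^-1` orb z.
have mF n : measurable (F n) by apply: (iter_meas mp); apply: orb_meas.
have AF : A = \bigcup_n F n.
  by apply/seteqP; split => y /= [n]; [move=> h; exists n|move=> _ h; exists n].
have mA : measurable A by rewrite AF; apply: bigcupT_measurable.
have inv : T @^-1` A = A.
  apply/seteqP; split => y /=.
    by move=> [n]; rewrite -iterSr => h; exists n.+1.
  move=> [n [i hi]]; exists n; exists i.+1.
  by rewrite -iterSr iterS hi.
have PA : pm P A = 1.
  case: (erg mA inv) => h; last by rewrite /pm h.
  have : pm P [set z] <= pm P A.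
    apply: pm_le => //; move=> y ->; exists 0%N; by exists 0%N.
  by rewrite /pm h /= => /(lt_le_trans z0); rewrite ltxx.
have ndF : nondecreasing_seq F.
  apply/nondecreasing_seqP => n; apply/subsetPset => y /= [i hi].
  by exists i.+1; rewrite iterS hi.
have h := pm_incr (P:=P) mF ndF; rewrite -AF in h; rewrite PA in h.
have e n : pm P (F n) = pm P (orb z) by rewrite /F (iter_pm mp) //; apply: orb_meas.
rewrite (_ : (fun n => pm P (F n)) = fun _ => pm P (orb z)) in h; last by apply: funext => n; apply: e.
apply/eqP; rewrite eq_le; apply/andP; split.
  by apply: (ler_cvg_to (cvg_cst _) h); near=> n.
by apply: (ler_cvg_to h (cvg_cst _)); near=> n.
Unshelve. all: end_near. Qed.

Lemma pm_T z : pm P [set z] <= pm P [set T z].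
Proof.
rewrite -/(pm P [set T z]) /pm -(mp.2 _ (sm (T z))) -/(pm P (T @^-1` [set T z])).
apply: pm_le => //; first by apply: (T_meas mp).
by move=> y -> /=.
Qed.

Lemma pm_iter_mono z i j : (i <= j)%N -> pm P [set iter i T z] <= pm P [set iter j T z].
Proof.
move=> /subnK <-; elim: (j - i)%N => [|k IH] //.
by apply: le_trans IH _; rewrite addSn iterS; apply: pm_T.
Qed.

Lemma atom_periodic x : 0 < pm P [set x] -> exists m, iter m.+1 T x = x.
Proof.
move=> x0.
have Tx0 : 0 < pm P [set T x] by apply: lt_le_trans (pm_T x).
have o1 := orb_full Tx0.
case: (pselect (orb (T x) x)) => [[m hm]|nx].
  by exists m; rewrite iterSr -hm.
have : pm P (orb x) = pm P [set x] + pm P (orb (T x)).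
  rewrite -pm_U //; try exact: orb_meas.
    congr pm; apply/seteqP; split => y /=.
      move=> [[|i] ->]; [by left|right; exists i; by rewrite iterSr].
    by move=> [->|[i ->]]; [exists 0%N|exists i.+1; rewrite iterSr].
  by apply/seteqP; split => // y [-> /nx].
have := pm_le1 P (orb_meas x).
lra.
Qed.


Lemma cycle_struct x : 0 < pm P [set x] -> exists s, [/\ (0 < s)%N, iter s T x = x,
  (forall i j, (i < s)%N -> (j < s)%N -> iter i T x = iter j T x -> i = j),
  (forall i, pm P [set iter i T x] = s%:R^-1) & (forall i, exists2 j, (j < s)%N & iter i T x = iter j T x)].
Proof.
move=> x0; have [m hm] := atom_periodic x0.
have ex : exists k, (0 < k)%N && `[< iter k T x = x >].
  by exists m.+1; apply/andP; split => //; apply/asboolP.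
case: (ex_minnP ex) => s /andP[s0 /asboolP hs] smin.
have nmin k : (0 < k)%N -> (k < s)%N -> iter k T x <> x.
  move=> k0 ks hk; have := smin k; rewrite k0 /=.
  have -> : `[< iter k T x = x >] = true by apply/asboolP.
  by move=> /(_ isT); rewrite leqNgt ks.
have iqs q : iter (q * s) T x = x.
  by elim: q => [|q IH] //; rewrite mulSn iterD IH hs.
have imod i : iter i T x = iter (i %% s) T x.
  by rewrite {1}(divn_eq i s) addnC iterD iqs.
have dist i j : (i < s)%N -> (j < s)%N -> iter i T x = iter j T x -> i = j.
  wlog ij : i j / (i <= j)%N.
    move=> W hi_ hj_ h; case: (leqP i j) => ij; first exact: W.
    by apply/esym/W => //; apply: ltnW.
  move=> hi_ hj_ h; apply/eqP; rewrite eqn_leq ij /=; rewrite leqNgt; apply/negP => ij'.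
  have e1 : iter (s - j) T (iter j T x) = x by rewrite -iterD subnK // ltnW.
  rewrite -h -iterD in e1.
  apply: (nmin (s - j + i)%N) => //.
    lia.
  lia.
have q1 i : pm P [set iter i T x] = pm P [set x].
  apply/eqP; rewrite eq_le; apply/andP; split.
    rewrite imod; rewrite -[X in _ <= pm P [set X]]hs; apply: pm_iter_mono.
    by apply: ltnW; rewrite ltn_mod.
  exact: (pm_iter_mono x (leq0n i)).
pose Fs := fun i => if (i < s)%N then [set iter i T x] else set0.
have orbE : orb x = \big[setU/set0]_(i < s) Fs i.
  apply/seteqP; split => y.
    move=> [i ->]; apply/(proj2 (mem_bigsetU Fs _ _)); exists (i %% s)%N; first by rewrite ltn_mod.
    by rewrite /Fs /= ltn_mod s0 /=; apply: imod.
  move/mem_bigsetU => [i _]; rewrite /Fs; case: ifP => // _ ->; by exists i.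
have := orb_full x0; rewrite orbE pm_big_disj; first last.
- move=> i j ij; rewrite /Fs; case: ifP => hi_; case: ifP => hj_; rewrite ?set0I ?setI0 //.
  apply/seteqP; split => // y [-> /dist]; rewrite /= => h.
  by move: ij; rewrite (h hi_ hj_) eqxx.
- by move=> i; rewrite /Fs; case: ifP.
have -> : \sum_(i < s) pm P (Fs i) = s%:R * pm P [set x].
  rewrite (eq_bigr (fun _ => pm P [set x])); last by move=> i _; rewrite /Fs ltn_ord q1.
  by rewrite sumr_const card_ord mulr_natl.
move=> hsq.
exists s; split => //.
- move=> i; rewrite q1.
  have sn : s%:R != 0 :> R by rewrite pnatr_eq0 -lt0n.
  by apply: (mulfI sn); rewrite hsq mulfV.
- by move=> i; exists (i %% s)%N; [rewrite ltn_mod|apply: imod].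
Qed.

Section Per.
Variables (x : Om) (s : nat) (s0 : (0 < s)%N) (hs : iter s T x = x)
  (hd : forall i j, (i < s)%N -> (j < s)%N -> iter i T x = iter j T x -> i = j)
  (hq : forall i, pm P [set iter i T x] = s%:R^-1)
  (hc : forall i, exists2 j, (j < s)%N & iter i T x = iter j T x).

Lemma u_per (B : set Om) i : measurable B ->
  pm P (B `&` iter (s + i) T @^-1` [set x]) = pm P (B `&` iter i T @^-1` [set x]).
Proof.
move=> mB; rewrite iter_preD.
set Y := iter s T @^-1` [set x].
have mY : measurable Y by apply: (iter_meas mp).
have pY : pm P Y = pm P [set x] by apply: (iter_pm mp).
set Z := Y `\` [set x].
have mZ : measurable Z by apply: measurableD.
have pZ : pm P Z = 0.
  have := pm_DI P mY (sm x).
  have -> : Y `&` [set x] = [set x] by apply/seteqP; split => [y []//|y -> /=]; rewrite /Y /= hs.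
  rewrite pY -/Z => h; lra.
have -> : B `&` iter i T @^-1` Y =
    (B `&` iter i T @^-1` [set x]) `|` (B `&` iter i T @^-1` Z).
  apply/seteqP; split => y /=.
    by move=> [By hy]; case: (pselect (iter i T y = x)) => h; [left|right].
  move=> [[By hy]|[By [hY _]]]; split => //.
  by rewrite /Y /= hy hs.
rewrite pm_U; first last.
- by apply/seteqP; split => // y [[_ h1] [_ [_ h2]]]; apply: h2.
- by apply: measurableI => //; apply: (iter_meas mp).
- by apply: measurableI => //; apply: (iter_meas mp).
have : pm P (B `&` iter i T @^-1` Z) <= 0.
  rewrite -pZ -(iter_pm mp i mZ); apply: pm_le.
  + by apply: measurableI => //; apply: (iter_meas mp).
  + exact: (iter_meas mp).
  + by move=> y [].
have := pm_ge0 P (B `&` iter i T @^-1` Z).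
move=> h1 h2; have -> : pm P (B `&` iter i T @^-1` Z) = 0 by apply/eqP; rewrite eq_le h1 h2.
by rewrite addr0.
Qed.

Lemma u_sum (B : set Om) : measurable B ->
  \sum_(i < s) pm P (B `&` iter i T @^-1` [set x]) = pm P B.
Proof.
move=> mB.
pose U i := if (i < s)%N then iter i T @^-1` [set x] else set0.
have mU i : measurable (U i) by rewrite /U; case: ifP => _ //; apply: (iter_meas mp).
have dU i j : (i < j)%N -> U i `&` U j = set0.
  move=> ij; rewrite /U; case: ifP => hi_; case: ifP => hj_; rewrite ?set0I ?setI0 //.
  apply/seteqP; split => // y [/= hi hj].
  have e : iter (j - i)%N T x = iter 0 T x.
    rewrite [in RHS]/= -[in RHS]hj -hi -iterD subnK //; exact: ltnW.
  have jis : (j - i < s)%N by apply: leq_ltn_trans hj_; apply: leq_subr.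
  have := hd jis s0 e.
  by move=> /eqP; rewrite subn_eq0 leqNgt ij.
have dU' i j : i != j -> (B `&` U i) `&` (B `&` U j) = set0.
  rewrite neq_ltn => /orP[] ij.
    by rewrite setIACA (dU _ _ ij) setI0.
  by rewrite setIACA [U i `&` U j]setIC (dU _ _ ij) setI0.
have mBU i : measurable (B `&` U i) by apply: measurableI.
have := pm_big_disj P s mBU dU'.
rewrite (eq_bigr (fun i : 'I_s => pm P (B `&` iter i T @^-1` [set x]))); last first.
  by move=> i _; rewrite /U ltn_ord.
move=> <-.
pose W := \big[setU/set0]_(i < s) U i.
have mW : measurable W by apply: bigsetU_measurable.
have -> : \big[setU/set0]_(i < s) (B `&` U i) = B `&` W.
  by rewrite /W big_distrr.
apply: pm_full => //.
apply/eqP; rewrite eq_le pm_le1 //=.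
have x0 : 0 < pm P [set x] by have := hq 0; rewrite /= => ->; rewrite invr_gt0 ltr0n.
rewrite -(orb_full x0); apply: pm_le => //; first exact: orb_meas.
move=> y [k ->]; have [j js ->] := hc k.
apply/(proj2 (mem_bigsetU U _ _)).
case: j js => [|j] js.
  by exists 0%N => //; rewrite /U s0.
exists (s - j.+1)%N; first lia.
rewrite /U ifT; last by lia.
have e := iterD (s - j.+1) j.+1 T x.
rewrite subnK in e; last exact: ltnW.
by rewrite hs in e; exact: (esym e).
Qed.

End Per.

End Cyc.

Section Fin.
Context (R : realType) (d : measure_display) (Om : measurableType d) (P : probability Om R)
  (T : Om -> Om) (mp : measure_preserving P T) (erg : ergodic P T)
  (sm : forall z : Om, measurable [set z]).

Lemma in_orb x y : 0 < pm P [set x] -> 0 < pm P [set y] -> orb T x y.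
Proof.
move=> x0 y0; have o1 := orb_full mp erg sm x0.
apply: contrapT => ny.
have := pm_le1 P (measurableU _ _ (orb_meas T sm x) (sm y)).
rewrite (pm_U P (orb_meas T sm x) (sm y)) ?o1; first lra.
by apply/seteqP; split => // z [oz zy]; apply: ny; rewrite -zy.
Qed.

Lemma atom_in (B : set Om) x0 : measurable B -> 0 < pm P B -> 0 < pm P [set x0] ->
  exists x, B x /\ 0 < pm P [set x].
Proof.
move=> mB B0 x0p; have o1 := orb_full mp erg sm x0p.
have e := pm_full mB (orb_meas T sm x0) o1.
case: (pselect (exists j, B (iter j T x0))) => [[j Bj]|nj].
  exists (iter j T x0); split => //; apply: lt_le_trans x0p _.
  exact: (pm_iter_mono mp sm x0 (leq0n j)).
have : B `&` orb T x0 = set0.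
  by apply/seteqP; split => // z [Bz [j hj]]; apply: nj; exists j; rewrite -hj.
by move=> h; rewrite h pm_set0 in e; rewrite -e ltxx in B0.
Qed.

Lemma prop_atom (B : set Om) x : cesaro_sqrt_property P T B -> B x -> 0 < pm P [set x] ->
  exists s, [/\ (0 < s)%N, pm P B = s%:R^-1 & pm P [set x] = s%:R^-1].
Proof.
move=> hB Bx x0; have hB' := hB; case: hB' => mB PB hlim.
have [s [s0 hs hd hq hc]] := cycle_struct mp erg sm x0.
have qs : pm P [set x] = s%:R^-1 by have := hq 0%N.
exists s; split => //.
set q := pm P [set x]; set p := pm P B.
have p0 : 0 < p by rewrite -lte_fin -PE.
pose u i := pm P (B `&` iter i T @^-1` [set x]).
have L1 : (fun n : nat => n%:R^-1 * \sum_(i < n) u i) @ \oo --> p * q.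
  rewrite /q qs /p -(u_sum mp erg sm s0 hs hd hq hc mB).
  by apply: cesaro_per => // i; apply: (u_per mp sm hs).
have L2 := hlim [set x] (sm x) (fun y (yx : [set x] y) => eq_ind_r B Bx yx).
have uq i : u i <= Num.sqrt q * Num.sqrt (u i).
  have u0 : 0 <= u i by apply: pm_ge0.
  have uq : u i <= q.
    rewrite /q -(iter_pm mp i (sm x)); apply: pm_le; first by apply: measurableI => //; apply: (iter_meas mp).
      exact: (iter_meas mp).
    by move=> y [].
  rewrite -{1}(sqr_sqrtr u0) expr2 mulrC ler_wpM2r ?sqrtr_ge0 //.
  by rewrite ler_sqrt // (le_trans u0 uq).
have h : p * q <= Num.sqrt q * (Num.sqrt p * q).
  apply: (ler_cvg_to L1 (cvgMr (a:=Num.sqrt q) L2)).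
  near=> n => /=; rewrite mulrCA; apply: ler_wpM2l; first by rewrite invr_ge0.
  by rewrite mulr_sumr; apply: ler_sum => i _; apply: uq.
have q0 : 0 < q by [].
have pq : q <= p by apply: pm_le; [exact: sm|exact: mB|move=> y ->].
rewrite mulrA ler_pM2r // in h.
have sp0 : 0 < Num.sqrt p by rewrite sqrtr_gt0.
rewrite -{1}(sqr_sqrtr (ltW p0)) expr2 ler_pM2r // in h.
rewrite ler_sqrt // in h.
have epq : p = q by apply/eqP; rewrite eq_le h pq.
rewrite epq /q qs.
by [].
exact: ltW q0.
Unshelve. all: end_near. Qed.

End Fin.

Lemma exists_atom (R : realType) (d : measure_display) (Om : measurableType d)
  (P : probability Om R) (T : Om -> Om) (mp : measure_preserving P T)
  (X : Type) (dist : X -> X -> R) (f : Om -> X) (g : X -> Om)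
  (hm : is_metric dist) (hsep : metric_separable dist) (fg : cancel f g) (gf : cancel g f)
  (hmeas : forall A : set Om, measurable A <-> <<s metric_open dist >> (f @` A))
  (B : set Om) : cesaro_sqrt_property P T B -> exists x, 0 < pm P [set x].
Proof.
move=> hB; have hB' := hB; case: hB' => mB PB _.
have sm := sing_meas hm fg gf hmeas.
apply: contrapT => nat.
have noat z : P [set z] = 0%E.
  rewrite (PE P (sm z)); congr EFin; apply/eqP; rewrite eq_le pm_ge0 andbT.
  by rewrite leNgt; apply/negP => h; apply: nat; exists z.
have p0 : 0 < pm P B by rewrite -lte_fin -PE.
have d0 : 0 < pm P B ^+ 3 / 4 by rewrite divr_gt0 // exprn_gt0.
have [N [C [mC CB dC cov small]]] := small_partition hm fg gf hmeas hsep noat mB d0.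
exact: (step1 mp hB mC CB dC cov small).
Qed.

Theorem proposition6p4 (R : realType) (d : measure_display) (Om : measurableType d)
  (P : probability Om R) (T : Om -> Om) :
  standard_space R Om -> measure_preserving P T -> ergodic P T ->
  ((exists B : set Om, cesaro_sqrt_property P T B) <->
   (exists (r : nat) (w : 'I_r -> Om), periodic_with P w)) /\
  (forall (B : set Om) (r : nat) (w : 'I_r -> Om),
     cesaro_sqrt_property P T B -> periodic_with P w -> P B = (r%:R^-1)%:E).
Proof.
move=> [X [dist [f [g [hm hcomp hsep [fg gf] hmeas]]]]] mp erg.
have sm := sing_meas hm fg gf hmeas.
have wpos r (w : 'I_r -> Om) (r0 : (0 < r)%N) : (forall i, P [set w i] = (r%:R^-1)%:E) ->
    0 < pm P [set w (Ordinal r0)] /\ pm P [set w (Ordinal r0)] = r%:R^-1.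
  by move=> hw; rewrite /pm hw /= invr_gt0 ltr0n.
split; first split.
- move=> [B hB].
  have [x0 x0p] := exists_atom mp hm hsep fg gf hmeas hB.
  have [s [s0 hs hd hq hc]] := cycle_struct mp erg sm x0p.
  exists s, (fun i : 'I_s => iter i T x0); split => //.
    by move=> i j e; apply: val_inj; exact: (hd _ _ (ltn_ord i) (ltn_ord j) e).
  by move=> i; rewrite (PE P (sm _)) hq.
- move=> [r [w [r0 winj hw]]].
  have [x0p xq] := wpos r w r0 hw.
  set x := w (Ordinal r0) in x0p xq.
  have [s [s0 hs hd hq hc]] := cycle_struct mp erg sm x0p.
  have qs : pm P [set x] = s%:R^-1 by have := hq 0%N.
  exists [set x]; split; first exact: sm.
    by rewrite (PE P (sm x)) lte_fin.
  move=> C mC Cx.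
  case: (pselect (C x)) => Cx'.
    have -> : C = [set x].
      by apply/seteqP; split => [y /Cx //|y ->].
    pose v i := Num.sqrt (pm P ([set x] `&` iter i T @^-1` [set x])).
    have hper : forall i, v (s + i)%N = v i.
      by move=> i; rewrite /v (u_per mp sm hs) //; exact: sm.
    have L := cesaro_per s0 hper.
    have Sv : \sum_(i < s) v i = Num.sqrt (pm P [set x]).
      clear L; case: s s0 hs hd hq hc qs hper => // s' _ hs hd hq hc qs _.
      rewrite big_ord_recl /= big1 ?addr0.
        rewrite /v; congr (Num.sqrt (pm P _)); apply/seteqP; split => [y [] //|y -> //].
      move=> i _; rewrite /v.
      have -> : [set x] `&` iter (bump 0 i) T @^-1` [set x] = set0.
        apply/seteqP; split => // y [-> /=] h.
        rewrite add0n in h.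
        have e : iter i.+1 T x = iter 0 T x by [].
        by have := hd i.+1 0%N (ltn_ord i) (ltn0Sn s') e.
      by rewrite pm_set0 sqrtr0.
    rewrite Sv in L.
    rewrite [X in _ --> X](_ : _ = Num.sqrt (pm P [set x]) / s%:R); first exact: L.
    by rewrite -/(pm P [set x]) qs.
  have -> : C = set0.
    by apply/seteqP; split => // y Cy; apply: Cx'; have := Cx y Cy => /= <-.
  have e n : (n%:R^-1 * \sum_(i < n) Num.sqrt (fine (P ([set x] `&` iter i T @^-1` set0)))) = 0.
    by rewrite big1 ?mulr0 // => i _; rewrite preimage_set0 setI0 measure0 /= sqrtr0.
  rewrite (funext e) measure0 /= mulr0; exact: cvg_cst.
- move=> B r w hB [r0 winj hw].
  have [x0p xq] := wpos r w r0 hw.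
  have hB' := hB; case: hB' => mB PB _.
  have p0 : 0 < pm P B by rewrite -lte_fin -PE.
  have [x [Bx xp]] := atom_in mp erg sm mB p0 x0p.
  have [s [s0 pB px]] := prop_atom mp erg sm hB Bx xp.
  have [k hk] := in_orb mp erg sm xp x0p.
  have [s' [_ _ _ hq _]] := cycle_struct mp erg sm xp.
  have : pm P [set w (Ordinal r0)] = pm P [set x].
    by rewrite hk hq; have := hq 0%N.
  rewrite xq px -pB => e.
  by rewrite (PE P mB) -e.
Qed.
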